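(* Let $\mathcal{E}_0=(E_0,\mathsf{Con}_0,\vdash_0)$ and $\mathcal{E}_1=(E_1,\mathsf{Con}_1,\vdash_1)$ be reversible event structures, and define $\mathcal{E}_0+\mathcal{E}_1=(E,\mathsf{Con},\vdash)$ as follows: - $E=\{(0,e)\mid e\in E_0\}\cup\{(1,e)\mid e\in E_1\}$, with injections $i_j:E_j\to E$, $i_j(e)=(j,e)$ for $j\in\{0,1\}$. - $X\in\mathsf{Con}$ iff $X=i_0(X_0)$ for some $X_0\in\mathsf{Con}_0$ or $X=i_1(X_1)$ for some $X_1\in\mathsf{Con}_1$. - $X\oslash Y\vdash(j,e)^*$ iff there are $X_j,Y_j\subseteq E_j$ with $X_j\oslash Y_j\vdash_j e^*$, $X=i_j(X_j)$, and $Y=i_j(Y_j)\cup(E\setminus i_j(E_j))$. Then $\mathcal{E}_0+\mathcal{E}_1$ is an RES, $i_0$ and $i_1$ are RES-morphisms, and $(\mathcal{E}_0+\mathcal{E}_1,i_0,i_1)$ is a coproduct of $\mathcal{E}_0$ and $\mathcal{E}_1$ in the category $\mathbf{RES}$.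
   Context: **Notation.** For a set $E$, write $\underline{E}=\{\underline{e}\mid e\in E\}$ for a disjoint set of formal ''reversal'' copies. $e^*$ denotes either $e$ (performing $e$) or $\underline{e}$ (reversing $e$); $(j,e)^*$ is $(j,e)$ or $\underline{(j,e)}$ correspondingly. For a partial function $f$ and a set $X$, write $f(X)=\{f(x)\mid x\in X,\ f(x)\text{ defined}\}$. $\bot$ denotes undefined. Writing $f(e)^*$ means $f(e)$ if $e^*=e$ and $\underline{f(e)}$ if $e^*=\underline{e}$. **Reversible event structures.** A reversible event structure (RES) is a triple $(E,\mathsf{Con},\vdash)$ where: - $E$ is a set of events. - $\mathsf{Con}$ is a set of finite subsets of $E$, closed under subsets. - ${\vdash}\subseteq\mathsf{Con}\times 2^E\times(E\cup\underline{E})$ is the enabling relation. We write $X\oslash Y\vdash e^*$ for $(X,Y,e^* )\in{\vdash}$. - The following axioms hold: 1. If $X\oslash Y\vdash e^*$ then $(X\cup\{e\})\cap Y=\emptyset$. 2. If $X\oslash Y\vdash\underline{e}$ then $e\in X$. 3. If $X\oslash Y\vdash e^*$, $X\subseteq X'\in\mathsf{Con}$ and $X'\cap Y=\emptyset$, then $X'\oslash Y\vdash e^*$. **RES-morphisms.** An RES-morphism $f:(E_0,\mathsf{Con}_0,\vdash_0)\to(E_1,\mathsf{Con}_1,\vdash_1)$ is a partial function $f:E_0\rightharpoonup E_1$ such that: - whenever $f(e)\neq\bot$ and $X\oslash Y\vdash_0 e^*$, there exists $Y_1\subseteq E_1$ such that every $e_0\in E_0$ with $f(e_0)\in Y_1$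 lies in $Y$, and $f(X)\oslash Y_1\vdash_1 f(e)^*$; - for every $X_0\in\mathsf{Con}_0$, $f(X_0)\in\mathsf{Con}_1$; - if $f(e)=f(e')\neq\bot$ and $e\neq e'$, then no $X\in\mathsf{Con}_0$ contains both $e$ and $e'$. $\mathbf{RES}$ is the category of RESs and RES-morphisms, with composition of partial functions. *)

(* Defs.v *)
From Stdlib Require Import List.

Definition fin_set {T : Type} (X : T -> Prop) : Prop :=
  exists l : list T, forall x, X x -> In x l.

Definition subset {T : Type} (X Y : T -> Prop) : Prop := forall x, X x -> Y x.
Definition set_eq {T : Type} (X Y : T -> Prop) : Prop := forall x, X x <-> Y x.

(* e* : either performing e (Do e) or reversing e (Undo e, i.e. underline e). *)
Inductive act (T : Type) : Type :=
| Do : T -> act T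
| Undo : T -> act T.
Arguments Do {T} _.
Arguments Undo {T} _.

Definition act_ev {T : Type} (a : act T) : T :=
  match a with Do e => e | Undo e => e end.

Definition act_map {A B : Type} (f : A -> B) (a : act A) : act B :=
  match a with Do e => Do (f e) | Undo e => Undo (f e) end.

(* Raw data of a reversible event structure (E, Con, |-);
   [enab X Y a] stands for  X ⊘ Y ⊢ a. *)
Record RES : Type := mkRES {
  ev : Type;
  Con : (ev -> Prop) -> Prop;
  enab : (ev -> Prop) -> (ev -> Prop) -> act ev -> Prop
}.

Definition is_RES (R : RES) : Prop :=
  (forall X, Con R X -> fin_set X) /\
  (forall X X', Con R X -> subset X' X -> Con R X') /\
  (forall X Y a, enab R X Y a -> Con R X) /\
  (forall X Y a, enab R X Y a -> forall x, (X x \/ x = act_ev a) -> ~ Y x) /\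
  (forall X Y e, enab R X Y (Undo e) -> X e) /\
  (forall X Y a X', enab R X Y a -> subset X X' -> Con R X' ->
     (forall x, X' x -> ~ Y x) -> enab R X' Y a).

Definition pimage {A B : Type} (f : A -> option B) (X : A -> Prop) : B -> Prop :=
  fun y => exists x, X x /\ f x = Some y.

Definition is_morphism (R0 R1 : RES) (f : ev R0 -> option (ev R1)) : Prop :=
  (forall (a : act (ev R0)) (e' : ev R1) X Y,
     f (act_ev a) = Some e' -> enab R0 X Y a ->
     exists Y1 : ev R1 -> Prop,
       (forall e0 y, f e0 = Some y -> Y1 y -> Y e0) /\
       enab R1 (pimage f X) Y1 (act_map (fun _ => e') a)) /\
  (forall X0, Con R0 X0 -> Con R1 (pimage f X0)) /\
  (forall e e' y, f e = Some y -> f e' = Some y -> e <> e' ->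
     ~ (exists X, Con R0 X /\ X e /\ X e')).

Definition image {A B : Type} (f : A -> B) (X : A -> Prop) : B -> Prop :=
  fun y => exists x, X x /\ y = f x.

Definition is_inl {A B : Type} (x : A + B) : Prop :=
  match x with inl _ => True | inr _ => False end.
Definition is_inr {A B : Type} (x : A + B) : Prop :=
  match x with inl _ => False | inr _ => True end.

(* The sum E0 + E1; events (0,e) = inl e, (1,e) = inr e. *)
Definition sum_RES (R0 R1 : RES) : RES :=
  {| ev := (ev R0 + ev R1)%type;
     Con := fun X =>
       (exists X0, Con R0 X0 /\ set_eq X (image inl X0)) \/
       (exists X1, Con R1 X1 /\ set_eq X (image inr X1));
     enab := fun X Y a =>
       (exists X0 Y0 a0, enab R0 X0 Y0 a0 /\ a = act_map inl a0 /\
          set_eq X (image inl X0) /\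
          set_eq Y (fun x => image inl Y0 x \/ is_inr x)) \/
       (exists X1 Y1 a1, enab R1 X1 Y1 a1 /\ a = act_map inr a1 /\
          set_eq X (image inr X1) /\
          set_eq Y (fun x => image inr Y1 x \/ is_inl x)) |}.

Definition inj0 (R0 R1 : RES) : ev R0 -> option (ev (sum_RES R0 R1)) :=
  fun e => Some (inl e).
Definition inj1 (R0 R1 : RES) : ev R1 -> option (ev (sum_RES R0 R1)) :=
  fun e => Some (inr e).

Definition pcomp {A B C : Type} (g : B -> option C) (f : A -> option B) : A -> option C :=
  fun x => match f x with Some y => g y | None => None end.

(* Main.v *)
Require Import Defs.
From Stdlib Require Import List.

Lemma act_ev_map {A B} (f : A -> B) a : act_ev (act_map f a) = f (act_ev a).
Proof. destruct a; reflexivity. Qed.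
Lemma act_map_const {A B C} (f : A -> B) (e' : C) a :
  act_map (fun _ => e') (act_map f a) = act_map (fun _ => e') a.
Proof. destruct a; reflexivity. Qed.

Lemma sum_is_RES R0 R1 : is_RES R0 -> is_RES R1 -> is_RES (sum_RES R0 R1).
Proof.
  intros [F0 [S0 [EC0 [A10 [A20 A30]]]]] [F1 [S1 [EC1 [A11 [A21 A31]]]]].
  split; [|split; [|split; [|split; [|split]]]].
  - intros X [[X0 [HC HX]]|[X0 [HC HX]]].
    + destruct (F0 X0 HC) as [l Hl]. exists (map inl l). intros x Hx.
      apply HX in Hx. destruct Hx as [y [Hy ->]]. apply in_map. auto.
    + destruct (F1 X0 HC) as [l Hl]. exists (map inr l). intros x Hx.
      apply HX in Hx. destruct Hx as [y [Hy ->]]. apply in_map. auto.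
  - intros X X' [[X0 [HC HX]]|[X0 [HC HX]]] Hsub.
    + left. exists (fun e => X' (inl e)). split.
      * apply (S0 X0); auto. intros e He. apply Hsub, HX in He.
        destruct He as [y [Hy Heq]]. injection Heq; intros; subst; auto.
      * intros x; split.
        -- intro Hx. destruct x as [e|e]. exists e; auto.
           apply Hsub, HX in Hx. destruct Hx as [y [_ Heq]]; discriminate.
        -- intros [y [Hy ->]]; auto.
    + right. exists (fun e => X' (inr e)). split.
      * apply (S1 X0); auto. intros e He. apply Hsub, HX in He.
        destruct He as [y [Hy Heq]]. injection Heq; intros; subst; auto.
      * intros x; split.
        -- intro Hx. destruct x as [e|e].
           apply Hsub, HX in Hx. destruct Hx as [y [_ Heq]]; discriminate.
           exists e; auto.
        -- intros [y [Hy ->]]; auto.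
  - intros X Y a [[X0 [Y0 [a0 [He [Ha [HX HY]]]]]]|[X0 [Y0 [a0 [He [Ha [HX HY]]]]]]].
    + left. exists X0. split; [eapply EC0; eauto|auto].
    + right. exists X0. split; [eapply EC1; eauto|auto].
  - intros X Y a [[X0 [Y0 [a0 [He [-> [HX HY]]]]]]|[X0 [Y0 [a0 [He [-> [HX HY]]]]]]] x Hx HYx;
      apply HY in HYx; rewrite act_ev_map in Hx.
    + destruct HYx as [[y [Hy ->]]| Hinr].
      * apply (A10 X0 Y0 a0 He y); auto. destruct Hx as [Hx|Hx].
        -- apply HX in Hx. destruct Hx as [z [Hz Heq]]. injection Heq; intros; subst; auto.
        -- injection Hx; intros; subst; auto.
      * destruct Hx as [Hx|Hx].
        -- apply HX in Hx. destruct Hx as [z [_ ->]]. simpl in Hinr; auto.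
        -- subst; simpl in Hinr; auto.
    + destruct HYx as [[y [Hy ->]]| Hinr].
      * apply (A11 X0 Y0 a0 He y); auto. destruct Hx as [Hx|Hx].
        -- apply HX in Hx. destruct Hx as [z [Hz Heq]]. injection Heq; intros; subst; auto.
        -- injection Hx; intros; subst; auto.
      * destruct Hx as [Hx|Hx].
        -- apply HX in Hx. destruct Hx as [z [_ ->]]. simpl in Hinr; auto.
        -- subst; simpl in Hinr; auto.
  - intros X Y e [[X0 [Y0 [a0 [He [Ha [HX HY]]]]]]|[X0 [Y0 [a0 [He [Ha [HX HY]]]]]]];
      destruct a0 as [e0|e0]; simpl in Ha; try discriminate;
      injection Ha; intros ->; apply HX; exists e0; (split; [first [eapply A20; eassumption | eapply A21; eassumption] | reflexivity]).
  - intros X Y a X' [[X0 [Y0 [a0 [He [Ha [HX HY]]]]]]|[X0 [Y0 [a0 [He [Ha [HX HY]]]]]]] Hsub HC Hdisj.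
    + left. exists (fun e => X' (inl e)), Y0, a0. split; [|split;[auto|split; auto]].
      * apply (A30 X0 Y0 a0); auto.
        -- intros e He'. apply Hsub, HX. exists e; auto.
        -- destruct HC as [[Z [HZ HXZ]]|[Z [HZ HXZ]]].
           ++ apply (S0 Z); auto. intros e He'. apply HXZ in He'.
              destruct He' as [y [Hy Heq]]; injection Heq; intros; subst; auto.
           ++ apply (S0 X0). eapply EC0; eauto. intros e He'. apply HXZ in He'.
              destruct He' as [y [_ Heq]]; discriminate.
        -- intros e He' HY0. apply (Hdisj (inl e)); auto. apply HY. left. exists e; auto.
      * intros x; split.
        -- intro Hx. destruct x as [e|e]. exists e; auto. exfalso.
           apply (Hdisj (inr e)); auto. apply HY; right; simpl; auto.
        -- intros [y [Hy ->]]; auto.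
    + right. exists (fun e => X' (inr e)), Y0, a0. split; [|split;[auto|split; auto]].
      * apply (A31 X0 Y0 a0); auto.
        -- intros e He'. apply Hsub, HX. exists e; auto.
        -- destruct HC as [[Z [HZ HXZ]]|[Z [HZ HXZ]]].
           ++ apply (S1 X0). eapply EC1; eauto. intros e He'. apply HXZ in He'.
              destruct He' as [y [_ Heq]]; discriminate.
           ++ apply (S1 Z); auto. intros e He'. apply HXZ in He'.
              destruct He' as [y [Hy Heq]]; injection Heq; intros; subst; auto.
        -- intros e He' HY0. apply (Hdisj (inr e)); auto. apply HY. left. exists e; auto.
      * intros x; split.
        -- intro Hx. destruct x as [e|e]. exfalso.
           apply (Hdisj (inl e)); auto. apply HY; right; simpl; auto. exists e; auto.
        -- intros [y [Hy ->]]; auto.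
Qed.

Lemma inj0_morph R0 R1 : is_morphism R0 (sum_RES R0 R1) (inj0 R0 R1).
Proof.
  split; [|split].
  - intros a e' X Y Hsome He. unfold inj0 in Hsome. injection Hsome; intros <-.
    exists (fun x => image inl Y x \/ is_inr x). split.
    + intros e0 y Hs HY1. unfold inj0 in Hs; injection Hs; intros <-.
      destruct HY1 as [[z [Hz Heq]]|Hf]. injection Heq; intros ->; auto. simpl in Hf; contradiction.
    + simpl. left. exists X, Y, a. split; auto. split. destruct a; reflexivity. split.
      * intros x; split; intros [z [Hz Hq]]; exists z; split; auto;
          [unfold inj0 in Hq; injection Hq; intros; subst; auto | subst; reflexivity].
      * intros x; split; auto.
  - intros X0 HC. simpl. left. exists X0. split; auto.
    intros x; split; intros [z [Hz Hq]]; exists z; split; auto;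
      [unfold inj0 in Hq; injection Hq; intros; subst; auto | subst; reflexivity].
  - intros e e' y H1 H2 Hne. unfold inj0 in *. intro. apply Hne. congruence.
Qed.

Lemma inj1_morph R0 R1 : is_morphism R1 (sum_RES R0 R1) (inj1 R0 R1).
Proof.
  split; [|split].
  - intros a e' X Y Hsome He. unfold inj1 in Hsome. injection Hsome; intros <-.
    exists (fun x => image inr Y x \/ is_inl x). split.
    + intros e0 y Hs HY1. unfold inj1 in Hs; injection Hs; intros <-.
      destruct HY1 as [[z [Hz Heq]]|Hf]. injection Heq; intros ->; auto. simpl in Hf; contradiction.
    + simpl. right. exists X, Y, a. split; auto. split. destruct a; reflexivity. split.
      * intros x; split; intros [z [Hz Hq]]; exists z; split; auto;
          [unfold inj1 in Hq; injection Hq; intros; subst; auto | subst; reflexivity].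
      * intros x; split; auto.
  - intros X0 HC. simpl. right. exists X0. split; auto.
    intros x; split; intros [z [Hz Hq]]; exists z; split; auto;
      [unfold inj1 in Hq; injection Hq; intros; subst; auto | subst; reflexivity].
  - intros e e' y H1 H2 Hne. unfold inj1 in *. intro. apply Hne. congruence.
Qed.

Theorem mainTheorem7 (R0 R1 : RES) :
  is_RES R0 -> is_RES R1 ->
  is_RES (sum_RES R0 R1) /\
  is_morphism R0 (sum_RES R0 R1) (inj0 R0 R1) /\
  is_morphism R1 (sum_RES R0 R1) (inj1 R0 R1) /\
  (forall (R : RES) (f0 : ev R0 -> option (ev R)) (f1 : ev R1 -> option (ev R)),
     is_RES R -> is_morphism R0 R f0 -> is_morphism R1 R f1 ->
     exists h : ev (sum_RES R0 R1) -> option (ev R),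
       is_morphism (sum_RES R0 R1) R h /\
       (forall e, pcomp h (inj0 R0 R1) e = f0 e) /\
       (forall e, pcomp h (inj1 R0 R1) e = f1 e) /\
       (forall h' : ev (sum_RES R0 R1) -> option (ev R),
          is_morphism (sum_RES R0 R1) R h' ->
          (forall e, pcomp h' (inj0 R0 R1) e = f0 e) ->
          (forall e, pcomp h' (inj1 R0 R1) e = f1 e) ->
          forall x, h' x = h x)).
Proof.
  intros H0 H1.
  split; [apply sum_is_RES; auto|].
  split; [apply inj0_morph|]. split; [apply inj1_morph|].
  destruct H0 as [F0 [S0 [EC0 [A10 [A20 A30]]]]].
  destruct H1 as [F1 [S1 [EC1 [A11 [A21 A31]]]]].
  intros R f0 f1 HR Hf0 Hf1.
  destruct Hf0 as [M0 [C0 I0]], Hf1 as [M1 [C1 I1]].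
  destruct HR as [FR [SR [ECR [A1R [A2R A3R]]]]].
  set (h := fun x : ev (sum_RES R0 R1) => match x with inl e => f0 e | inr e => f1 e end).
  exists h.
  split; [| split; [intro; reflexivity | split; [intro; reflexivity|]]].
  2:{ intros h' _ G0 G1 [e|e]; [exact (G0 e) | exact (G1 e)]. }
  split; [|split].
  - intros a e' X Y Hs
      [[X0 [Y0 [a0 [He [-> [HX HY]]]]]]|[X0 [Y0 [a0 [He [-> [HX HY]]]]]]];
      rewrite act_ev_map in Hs; simpl in Hs.
    + destruct (M0 a0 e' X0 Y0 Hs He) as [Y1 [HY1 HE]]. exists Y1.
      assert (Hsub : subset (pimage h X) (pimage f0 X0)).
      { intros y [x [Hx Hq]]. apply HX in Hx. destruct Hx as [z [Hz ->]]. exists z; auto. }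
      split.
      * intros [e0|e0] y Hh HYy; apply HY. left. exists e0. split; eauto. right; simpl; auto.
      * rewrite act_map_const. apply (A3R _ _ _ _ HE).
        -- intros y [z [Hz Hq]]. exists (inl z). split; auto. apply HX; exists z; auto.
        -- apply (SR (pimage f0 X0)); auto. apply C0. eapply EC0; eauto.
        -- intros y Hy. apply (A1R _ _ _ HE y). left. auto.
    + destruct (M1 a0 e' X0 Y0 Hs He) as [Y1 [HY1 HE]]. exists Y1.
      assert (Hsub : subset (pimage h X) (pimage f1 X0)).
      { intros y [x [Hx Hq]]. apply HX in Hx. destruct Hx as [z [Hz ->]]. exists z; auto. }
      split.
      * intros [e0|e0] y Hh HYy; apply HY. right; simpl; auto. left. exists e0. split; eauto.
      * rewrite act_map_const. apply (A3R _ _ _ _ HE).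
        -- intros y [z [Hz Hq]]. exists (inr z). split; auto. apply HX; exists z; auto.
        -- apply (SR (pimage f1 X0)); auto. apply C1. eapply EC1; eauto.
        -- intros y Hy. apply (A1R _ _ _ HE y). left. auto.
  - intros X [[X0 [HC HX]]|[X0 [HC HX]]].
    + apply (SR (pimage f0 X0)); [apply C0; auto|].
      intros y [x [Hx Hq]]. apply HX in Hx. destruct Hx as [z [Hz ->]]. exists z; auto.
    + apply (SR (pimage f1 X0)); [apply C1; auto|].
      intros y [x [Hx Hq]]. apply HX in Hx. destruct Hx as [z [Hz ->]]. exists z; auto.
  - intros x x' y Hx Hx' Hne [X [[[X0 [HC HX]]|[X0 [HC HX]]] [Hxx Hxx']]];
      apply HX in Hxx; apply HX in Hxx';
      destruct Hxx as [a [Ha ->]], Hxx' as [b [Hb ->]]; simpl in Hx, Hx'.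
    + apply (I0 a b y Hx Hx'). intro; subst; apply Hne; reflexivity. exists X0; auto.
    + apply (I1 a b y Hx Hx'). intro; subst; apply Hne; reflexivity. exists X0; auto.
Qed.
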